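(* Let $N\geq 1$, let $J=\bigoplus_{k=1}^N\begin{bmatrix}0&1\\-1&0\end{bmatrix}$ be the $2N\times 2N$ symplectic form, let $V$ be any real symmetric $2N\times 2N$ matrix, and let $C$ be any complex $2N\times 2N$ matrix. Set $R_C\coloneqq \operatorname{Re}(C^\dagger C)$, $I_C\coloneqq \operatorname{Im}(C^\dagger C)$ (real and imaginary parts taken entrywise) and $\tilde V\coloneqq JV$. Then for every integer $l\geq 0$, $$2\operatorname{tr}\left[I_C J\tilde V^{2l+1}\right]+\operatorname{tr}\left[R_C J\tilde V^{2l}\right]=0,$$ where $\tilde V^{0}$ is the identity matrix.
   Context: In the paper, $V$ is the covariance matrix $V_{kl}=\frac12\langle\{\hat\xi_k,\hat\xi_l\}\rangle$ of an $N$-mode state with quadrature vector $\hat{\vec\xi}=(\hat x_1,\hat p_1,\dots,\hat x_N,\hat p_N)^T$, and $C$ is the matrix whose $k$-th row is the coefficient vector $\vec c_k\in\mathbb{C}^{2N}$ of a linear Lindblad operator $\hat L_k=\vec c_k\cdot\hat{\vec\xi}$. The quantities $2\operatorname{tr}(I_CJ\tilde V^k)+\operatorname{tr}(R_CJ\tilde V^{k-1})$, $k=1,\dots,2N$, are the expressions whose vanishing gives necessary conditions for stabilizability; the theorem says those with odd $k$ vanish identically. *)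

(* Defs.v *)
(* Real scalars: an arbitrary real closed field R (e.g. the reals);
   complex scalars: R[i] = complex R from mathcomp-real-closed. *)
From mathcomp Require Import all_boot all_order all_algebra.
From mathcomp Require Import complex.
Set Implicit Arguments. Unset Strict Implicit. Unset Printing Implicit Defensive.
Import Order.TTheory GRing.Theory Num.Theory.
Local Open Scope ring_scope.

(* The 2N x 2N symplectic form J = (+)_{k=1}^N [[0,1],[-1,0]] with 0-based
   indices: J_{2k,2k+1} = 1, J_{2k+1,2k} = -1, all other entries 0. *)
Definition sympJ (R : pzRingType) (N : nat) : 'M[R]_(N.*2) :=
  \matrix_(i, j)
    (if ~~ odd i && (j == i.+1 :> nat) then 1
     else if odd i && (j.+1 == i :> nat) then -1 else 0).

Definition mxpow (R : pzRingType) (n : nat) (A : 'M[R]_n) (k : nat) : 'M[R]_n :=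
  iter k (mulmx A) 1%:M.

Definition adjC (R : rcfType) (m n : nat) (C : 'M[R[i]]_(m, n)) : 'M[R[i]]_(n, m) :=
  \matrix_(i, j) ((C j i)^*)%C.

Definition mxRe (R : rcfType) (m n : nat) (A : 'M[R[i]]_(m, n)) : 'M[R]_(m, n) :=
  \matrix_(i, j) complex.Re (A i j).
Definition mxIm (R : rcfType) (m n : nat) (A : 'M[R[i]]_(m, n)) : 'M[R]_(m, n) :=
  \matrix_(i, j) complex.Im (A i j).

(* Main.v *)
Require Import Defs.
From mathcomp Require Import all_boot all_order all_algebra.
From mathcomp Require Import complex.
From mathcomp Require Import zify ring lra.
Set Implicit Arguments. Unset Strict Implicit.
Import Order.TTheory GRing.Theory Num.Theory.
Local Open Scope ring_scope.

Section S.
Variable R : rcfType.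

Lemma herm_conj n (C : 'M[R[i]]_n) i j :
  (adjC C *m C) j i = ((adjC C *m C) i j)^*%C.
Proof.
rewrite !mxE rmorph_sum; apply: eq_bigr => k _.
by rewrite !mxE rmorphM /= conjcK mulrC.
Qed.

Lemma Re_sym n (C : 'M[R[i]]_n) : (mxRe (adjC C *m C))^T = mxRe (adjC C *m C).
Proof.
apply/matrixP => i j; move: (@herm_conj _ C i j); set H := adjC C *m C => h; clearbody H.
rewrite !mxE h; by case: (H i j) => a b /=; rewrite ?opprK.
Qed.

Lemma Im_asym n (C : 'M[R[i]]_n) : (mxIm (adjC C *m C))^T = - mxIm (adjC C *m C).
Proof.
apply/matrixP => i j; move: (@herm_conj _ C i j); set H := adjC C *m C => h; clearbody H.
rewrite !mxE h; by case: (H i j) => a b /=; rewrite ?opprK.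
Qed.

Lemma J_tr N : (sympJ R N)^T = - sympJ R N.
Proof.
apply/matrixP => -[i Hi] [j Hj]; rewrite !mxE /=.
rewrite [j.+1 == i]eq_sym [i.+1 == j]eq_sym.
have [E1|E1] := eqVneq i j.+1; have [E2|E2] := eqVneq j i.+1.
- by exfalso; subst; lia.
- subst i => /=; case: (odd j) => /=; by rewrite ?opprK ?oppr0.
- subst j => /=; case: (odd i) => /=; by rewrite ?opprK ?oppr0.
- by rewrite /= !andbF oppr0.
Qed.

Definition pn (i : nat) := if odd i then i.-1 else i.+1.

Lemma pn_lt N (i : 'I_(N.*2)) : (pn i < N.*2)%N.
Proof.
rewrite /pn; case: (boolP (odd i)) => oi; first by have := ltn_ord i; lia.
have := ltn_ord i; rewrite leq_eqVlt => /orP [/eqP h|]//.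
by have := congr1 odd h; rewrite odd_double /= oi.
Qed.

Definition pp N (i : 'I_(N.*2)) : 'I_(N.*2) := Ordinal (pn_lt i).

Definition sg (i : nat) : R := if odd i then -1 else 1.

Lemma J_row N (i k : 'I_(N.*2)) : sympJ R N i k = (k == pp i)%:R * sg i.
Proof.
rewrite mxE /sg -val_eqE /= /pn; case: (boolP (odd i)) => oi /=.
- have i0 : (0 < i)%N by move: oi; case: (nat_of_ord i).
  have -> : (k.+1 == i :> nat) = (k == i.-1 :> nat) by apply/eqP/eqP; lia.
  case: (k == i.-1 :> nat); by rewrite ?mul1r ?mul0r.
- case: (k == i.+1 :> nat); by rewrite ?mul1r ?mul0r.
Qed.

Lemma ppK N (i : 'I_(N.*2)) : pp (pp i) = i.
Proof.
apply: val_inj; rewrite /= /pn; case: (boolP (odd i)) => oi /=.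
- have i0 : (0 < i)%N by move: oi; case: (nat_of_ord i).
  have -> : odd i.-1 = false by move: oi i0; case: (nat_of_ord i) => //= n; case: (odd n).
  lia.
- by rewrite oi.
Qed.

Lemma sg_pp N (i : 'I_(N.*2)) : sg (pp i) = - sg i.
Proof.
rewrite /sg /= /pn; case: (boolP (odd i)) => oi /=.
- have i0 : (0 < i)%N by move: oi; case: (nat_of_ord i).
  have -> : odd i.-1 = false by move: oi i0; case: (nat_of_ord i) => //= n; case: (odd n).
  by rewrite opprK.
- by rewrite oi.
Qed.

Lemma JJ N : sympJ R N *m sympJ R N = - 1%:M.
Proof.
apply/matrixP => i j; rewrite !mxE.
under eq_bigr => k _ do rewrite J_row mulrAC.
rewrite (bigD1 (pp i)) //= big1 ?addr0; last first.
  by move=> k /negbTE ->; rewrite !mul0r.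
rewrite eqxx mul1r J_row sg_pp ppK [j == i]eq_sym.
rewrite /sg; case: (odd i); case: (i == j); by rewrite /= ?mul0r ?mul1r ?opprK ?oppr0 ?mulr1 ?mulrN1.
Qed.

Lemma mxpowSr n (A : 'M[R]_n) k : mxpow A k.+1 = mxpow A k *m A.
Proof.
have S j : mxpow A j.+1 = A *m mxpow A j by [].
elim: k => [|k IH]; first by rewrite S /mxpow /= mulmx1 mul1mx.
by rewrite S IH mulmxA -S IH.
Qed.

Lemma Pk N (V : 'M[R]_(N.*2)) (hV : V^T = V) k :
  (mxpow (sympJ R N *m V) k)^T *m sympJ R N =
  (-1) ^+ k *: (sympJ R N *m mxpow (sympJ R N *m V) k).
Proof.
elim: k => [|k IH]; first by rewrite /= trmx1 mul1mx mulmx1 scale1r.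
rewrite {1}mxpowSr trmx_mul -mulmxA IH -scalemxAr.
rewrite [mxpow _ k.+1]/mxpow /= -/(mxpow _ k).
rewrite trmx_mul hV J_tr !mulmxA mulmxN mulNmx -(mulmxA V) JJ mulmxN mulmx1 opprK.
by rewrite mulNmx mul1mx exprS mulN1r scaleNr -scalerN -mulNmx opprK.
Qed.

Lemma Mk N (V : 'M[R]_(N.*2)) (hV : V^T = V) k :
  (sympJ R N *m mxpow (sympJ R N *m V) k)^T =
  (- (-1) ^+ k) *: (sympJ R N *m mxpow (sympJ R N *m V) k).
Proof. by rewrite trmx_mul J_tr mulmxN Pk // scaleNr. Qed.

Lemma tr0 n (A M : 'M[R]_n) a b : A^T = a *: A -> M^T = b *: M -> a * b = -1 ->
  \tr (A *m M) = 0.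
Proof.
move=> hA hM hab.
have h : \tr (A *m M) = - \tr (A *m M).
  rewrite -{1}mxtrace_tr trmx_mul hA hM -scalemxAl -scalemxAr !mxtraceZ mxtrace_mulC.
  by rewrite mulrA [b * a]mulrC hab mulN1r.
have : \tr (A *m M) *+ 2 = 0 by rewrite mulr2n {1}h addNr.
by move/eqP; rewrite mulrn_eq0 /= => /eqP.
Qed.
End S.
Unset Implicit Arguments.

Theorem theorem1 (R : rcfType) (N : nat) (hN : (1 <= N)%N)
  (V : 'M[R]_(N.*2)) (hV : V^T = V) (C : 'M[R[i]]_(N.*2)) (l : nat) :
  let J := sympJ R N in
  let RC := mxRe (adjC C *m C) in
  let IC := mxIm (adjC C *m C) in
  let Vt := J *m V in
  2 * \tr (IC *m J *m mxpow Vt (l.*2.+1)) + \tr (RC *m J *m mxpow Vt l.*2) = 0.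
Proof.
move=> J RC IC Vt; rewrite -!mulmxA.
have h1 : \tr (IC *m (J *m mxpow Vt l.*2.+1)) = 0.
  apply: (tr0 (a:=-1) (b:=1)); last by rewrite mulr1.
  - by rewrite /IC Im_asym scaleN1r.
  - by rewrite /J /Vt Mk // -signr_odd /= odd_double /= expr1 opprK scale1r.
have h2 : \tr (RC *m (J *m mxpow Vt l.*2)) = 0.
  apply: (tr0 (a:=1) (b:=-1)); last by rewrite mul1r.
  - by rewrite /RC Re_sym scale1r.
  - by rewrite /J /Vt Mk // -signr_odd odd_double expr0.
by rewrite h1 h2 mulr0 addr0.
Qed.
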